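(* Let $M$ be a timelike surface in $\mathbb{R}^{3,1}$ with a canonical null direction with respect to a constant unit spacelike vector $Z$, such that $II(Z^\top,Z^\top)\neq0$ everywhere. Then, in the orthonormal normal frame $(Z^\perp,\nu)$, $$II(W,W)=\frac{K_N}{|II(Z^\top,Z^\top)|}\,Z^\perp+\frac{|\vec H|^2-K}{|II(Z^\top,Z^\top)|}\,\nu .$$ In particular $|II(W,W)|^2\,|II(Z^\top,Z^\top)|^2=(|\vec H|^2-K)^2+K_N^2$.
   Context: $\mathbb{R}^{3,1}$ is $\mathbb{R}^{4}$ with the metric $-dx_1^2+dx_2^2+dx_3^2+dx_4^2$. A surface is timelike if the induced metric has signature $(1,1)$ (its normal bundle is then spacelike); a vector $v$ is lightlike if $v\ne0$ and $\langle v,v\rangle=0$. For a constant vector $Z$, $Z=Z^\top+Z^\perp$ along $M$; $M$ has a canonical null direction with respect to $Z$ if $Z^\top$ is lightlike everywhere on $M$. $W$ is the unique lightlike tangent field with $\langle Z^\top,W\rangle=-1$; $II$ is the second fundamental form, $A_\xi$ the shape operator ($\langle A_\xi X,Y\rangle=\langle II(X,Y),\xi\rangle$), $\vec H=\frac12\operatorname{tr}II$ the mean curvature vector, $|\vec H|^2=\langle\vec H,\vec H\rangle$, $K$ the Gaussian curvature. $\nu:=II(Z^\top,Z^\top)/|II(Z^\top,Z^\top)|$, $e_1=(Z^\top+W)/\sqrt2$, $e_2=(Z^\top-W)/\sqrt2$, and the normal curvature is $K_N:=\langle (A_{Z^\perp}\circ A_\nu-A_\nu\circ A_{Z^\perp})(e_1),e_2\rangle$.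 *)

(* Defs.v *)
From Stdlib Require Import Reals Lra ClassicalEpsilon.
Open Scope R_scope.

Record V4 := mkV4 { c0 : R; c1 : R; c2 : R; c3 : R }.

Definition vzero : V4 := mkV4 0 0 0 0.
Definition vadd (x y : V4) : V4 :=
  mkV4 (c0 x + c0 y) (c1 x + c1 y) (c2 x + c2 y) (c3 x + c3 y).
Definition vscal (a : R) (x : V4) : V4 :=
  mkV4 (a * c0 x) (a * c1 x) (a * c2 x) (a * c3 x).
Definition vsub (x y : V4) : V4 := vadd x (vscal (-1) y).
Definition ip (x y : V4) : R :=
  - (c0 x * c0 y) + c1 x * c1 y + c2 x * c2 y + c3 x * c3 y.
(** length of a spacelike vector *)
Definition vnorm (x : V4) : R := sqrt (ip x x).

Definition open2 (U : R -> R -> Prop) : Prop :=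
  forall u v, U u v -> exists r, 0 < r /\
    forall u' v', Rabs (u' - u) < r -> Rabs (v' - v) < r -> U u' v'.

Definition cont2 (U : R -> R -> Prop) (g : R -> R -> R) : Prop :=
  forall u v, U u v -> forall eps, 0 < eps -> exists d, 0 < d /\
    forall u' v', Rabs (u' - u) < d -> Rabs (v' - v) < d ->
      Rabs (g u' v' - g u v) < eps.

(** partial derivatives (value 0 chosen arbitrarily where they do not exist) *)
Definition D1 (g : R -> R -> R) (u v : R) : R :=
  epsilon (inhabits 0) (fun l => derivable_pt_lim (fun x => g x v) u l).
Definition D2 (g : R -> R -> R) (u v : R) : R :=
  epsilon (inhabits 0) (fun l => derivable_pt_lim (fun y => g u y) v l).

Definition ex_D1 (g : R -> R -> R) (u v : R) : Prop :=
  exists l, derivable_pt_lim (fun x => g x v) u l.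
Definition ex_D2 (g : R -> R -> R) (u v : R) : Prop :=
  exists l, derivable_pt_lim (fun y => g u y) v l.

Fixpoint Ck (k : nat) (U : R -> R -> Prop) (g : R -> R -> R) : Prop :=
  match k with
  | O => cont2 U g
  | S k' => cont2 U g /\ (forall u v, U u v -> ex_D1 g u v /\ ex_D2 g u v)
            /\ Ck k' U (D1 g) /\ Ck k' U (D2 g)
  end.

Definition smooth_on (U : R -> R -> Prop) (g : R -> R -> R) : Prop :=
  forall k, Ck k U g.

Definition smooth_map_on (U : R -> R -> Prop) (f : R -> R -> V4) : Prop :=
  smooth_on U (fun a b => c0 (f a b)) /\ smooth_on U (fun a b => c1 (f a b)) /\
  smooth_on U (fun a b => c2 (f a b)) /\ smooth_on U (fun a b => c3 (f a b)).

Definition VD1 (f : R -> R -> V4) (u v : R) : V4 :=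
  mkV4 (D1 (fun a b => c0 (f a b)) u v) (D1 (fun a b => c1 (f a b)) u v)
       (D1 (fun a b => c2 (f a b)) u v) (D1 (fun a b => c3 (f a b)) u v).
Definition VD2 (f : R -> R -> V4) (u v : R) : V4 :=
  mkV4 (D2 (fun a b => c0 (f a b)) u v) (D2 (fun a b => c1 (f a b)) u v)
       (D2 (fun a b => c2 (f a b)) u v) (D2 (fun a b => c3 (f a b)) u v).

(** index 0 = first coordinate u, index 1 (or any other) = second coordinate v *)
Definition Dpart (i : nat) (g : R -> R -> R) : R -> R -> R :=
  match i with O => D1 g | _ => D2 g end.
Definition dpart (f : R -> R -> V4) (i : nat) : R -> R -> V4 :=
  match i with O => VD1 f | _ => VD2 f end.

Definition sum2 (h : nat -> R) : R := h 0%nat + h 1%nat.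
Definition vsum2 (h : nat -> V4) : V4 := vadd (h 0%nat) (h 1%nat).

Definition gm (f : R -> R -> V4) (i j : nat) (u v : R) : R :=
  ip (dpart f i u v) (dpart f j u v).
Definition detg (f : R -> R -> V4) (u v : R) : R :=
  gm f 0 0 u v * gm f 1 1 u v - gm f 0 1 u v * gm f 0 1 u v.
Definition ginv (f : R -> R -> V4) (i j : nat) (u v : R) : R :=
  match i, j with
  | O, O => gm f 1 1 u v / detg f u v
  | S _, S _ => gm f 0 0 u v / detg f u v
  | _, _ => - gm f 0 1 u v / detg f u v
  end.

(** tangent vector with coordinates a = (a^1,a^2) in the basis (f_u, f_v) *)
Definition cd (a : R * R) (i : nat) : R := match i with O => fst a | _ => snd a end.
Definition tv (f : R -> R -> V4) (a : R * R) (u v : R) : V4 :=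
  vadd (vscal (fst a) (VD1 f u v)) (vscal (snd a) (VD2 f u v)).
Definition basis (i : nat) : R * R := match i with O => (1, 0) | _ => (0, 1) end.

(** coordinates of the tangential part X^T of a vector X *)
Definition tcoord (f : R -> R -> V4) (X : V4) (u v : R) : R * R :=
  (sum2 (fun l => ginv f 0 l u v * ip X (dpart f l u v)),
   sum2 (fun l => ginv f 1 l u v * ip X (dpart f l u v))).
Definition tproj (f : R -> R -> V4) (X : V4) (u v : R) : V4 :=
  tv f (tcoord f X u v) u v.
Definition nproj (f : R -> R -> V4) (X : V4) (u v : R) : V4 :=
  vsub X (tproj f X u v).

Definition IIb (f : R -> R -> V4) (i j : nat) (u v : R) : V4 :=
  nproj f (dpart (dpart f i) j u v) u v.
Definition II (f : R -> R -> V4) (a b : R * R) (u v : R) : V4 :=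
  vsum2 (fun i => vsum2 (fun j => vscal (cd a i * cd b j) (IIb f i j u v))).

Definition Hvec (f : R -> R -> V4) (u v : R) : V4 :=
  vscal (/2) (vsum2 (fun i => vsum2 (fun j => vscal (ginv f i j u v) (IIb f i j u v)))).

(** shape operator A_xi in coordinates: <A_xi X, Y> = <II(X,Y), xi> *)
Definition Ash (f : R -> R -> V4) (xi : V4) (a : R * R) (u v : R) : R * R :=
  (sum2 (fun i => ginv f 0 i u v * ip (II f a (basis i) u v) xi),
   sum2 (fun i => ginv f 1 i u v * ip (II f a (basis i) u v) xi)).

Definition Gam (f : R -> R -> V4) (k i j : nat) (u v : R) : R :=
  / 2 * sum2 (fun l => ginv f k l u v *
     (Dpart i (gm f j l) u v + Dpart j (gm f i l) u v - Dpart l (gm f i j) u v)).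

(** R_1212 = < R(d1,d2)d2, d1 >, R(X,Y) = [nabla_X,nabla_Y] - nabla_[X,Y] *)
Definition Riem1212 (f : R -> R -> V4) (u v : R) : R :=
  sum2 (fun m => gm f 0 m u v *
    (D1 (Gam f m 1 1) u v - D2 (Gam f m 0 1) u v
     + sum2 (fun l => Gam f l 1 1 u v * Gam f m 0 l u v
                      - Gam f l 0 1 u v * Gam f m 1 l u v))).

Definition Kgauss (f : R -> R -> V4) (u v : R) : R :=
  Riem1212 f u v / detg f u v.

Definition ZT (f : R -> R -> V4) (Z : V4) (u v : R) : R * R := tcoord f Z u v.

Definition nuv (f : R -> R -> V4) (Z : V4) (u v : R) : V4 :=
  let N := II f (ZT f Z u v) (ZT f Z u v) u v in vscal (/ vnorm N) N.

Definition e1c (f : R -> R -> V4) (Z : V4) (w : R * R) (u v : R) : R * R :=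
  let T := ZT f Z u v in ((fst T + fst w) / sqrt 2, (snd T + snd w) / sqrt 2).
Definition e2c (f : R -> R -> V4) (Z : V4) (w : R * R) (u v : R) : R * R :=
  let T := ZT f Z u v in ((fst T - fst w) / sqrt 2, (snd T - snd w) / sqrt 2).

Definition psub (a b : R * R) : R * R := (fst a - fst b, snd a - snd b).

Definition KN (f : R -> R -> V4) (Z : V4) (w : R * R) (u v : R) : R :=
  let Zp := nproj f Z u v in
  let nu := nuv f Z u v in
  let e1 := e1c f Z w u v in
  ip (tv f (psub (Ash f Zp (Ash f nu e1 u v) u v) (Ash f nu (Ash f Zp e1 u v) u v)) u v)
     (tv f (e2c f Z w u v) u v).

(* Main.v *)
From Pilot Require Import Defs.
From Coquelicot Require Import Coquelicot.
From Stdlib Require Import Reals Lra Psatz ClassicalEpsilon.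
Import Pilot.Defs.
Open Scope R_scope.

Definition lineF {A : Type} (j : nat) (h : R -> R -> A) (u v : R) : R -> A :=
  match j with O => fun t => h t v | S _ => fun t => h u t end.
Definition lpt (j : nat) (u v : R) : R := match j with O => u | S _ => v end.
Definition DL (j : nat) (g : R -> R -> R) (u v l : R) : Prop :=
  derivable_pt_lim (lineF j g u v) (lpt j u v) l.
Definition VDL (j : nat) (h : R -> R -> V4) (u v : R) (L : V4) : Prop :=
  DL j (fun x y => c0 (h x y)) u v (c0 L) /\ DL j (fun x y => c1 (h x y)) u v (c1 L) /\
  DL j (fun x y => c2 (h x y)) u v (c2 L) /\ DL j (fun x y => c3 (h x y)) u v (c3 L).

Lemma DL_Dpart j g u v l : DL j g u v l -> Dpart j g u v = l.
Proof.
  unfold DL; destruct j; simpl; intro H.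
  - unfold D1. apply (uniqueness_limite (fun x => g x v) u).
    + apply (epsilon_spec (inhabits 0) (fun l => derivable_pt_lim (fun x => g x v) u l)). exists l; exact H.
    + exact H.
  - unfold D2. apply (uniqueness_limite (fun y => g u y) v).
    + apply (epsilon_spec (inhabits 0) (fun l => derivable_pt_lim (fun y => g u y) v l)). exists l; exact H.
    + exact H.
Qed.

Lemma DL_eq j g u v l l' : DL j g u v l -> l = l' -> DL j g u v l'.
Proof. intros H E; subst; exact H. Qed.

Lemma DL_plus j g1 g2 u v l1 l2 : DL j g1 u v l1 -> DL j g2 u v l2 ->
  DL j (fun x y => g1 x y + g2 x y) u v (l1 + l2).
Proof. unfold DL; destruct j; simpl; intros H1 H2; exact (derivable_pt_lim_plus _ _ _ _ _ H1 H2). Qed.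

Lemma DL_minus j g1 g2 u v l1 l2 : DL j g1 u v l1 -> DL j g2 u v l2 ->
  DL j (fun x y => g1 x y - g2 x y) u v (l1 - l2).
Proof. unfold DL; destruct j; simpl; intros H1 H2; exact (derivable_pt_lim_minus _ _ _ _ _ H1 H2). Qed.

Lemma DL_mult j g1 g2 u v l1 l2 : DL j g1 u v l1 -> DL j g2 u v l2 ->
  DL j (fun x y => g1 x y * g2 x y) u v (l1 * g2 u v + g1 u v * l2).
Proof. unfold DL; destruct j; simpl; intros H1 H2; exact (derivable_pt_lim_mult _ _ _ _ _ H1 H2). Qed.

Lemma DL_div j g1 g2 u v l1 l2 : DL j g1 u v l1 -> DL j g2 u v l2 -> g2 u v <> 0 ->
  DL j (fun x y => g1 x y / g2 x y) u v ((l1 * g2 u v - l2 * g1 u v) / (g2 u v)²).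
Proof. unfold DL; destruct j; simpl; intros H1 H2 H3; exact (derivable_pt_lim_div _ _ _ _ _ H1 H2 H3). Qed.

Lemma DL_const j c u v : DL j (fun _ _ => c) u v 0.
Proof. unfold DL; destruct j; simpl; apply derivable_pt_lim_const. Qed.

Lemma DL_opp j g u v l : DL j g u v l -> DL j (fun x y => - g x y) u v (- l).
Proof. unfold DL; destruct j; simpl; intros H1; exact (derivable_pt_lim_opp _ _ _ H1). Qed.

Lemma DL_ip j A B u v LA LB : VDL j A u v LA -> VDL j B u v LB ->
  DL j (fun x y => ip (A x y) (B x y)) u v (ip LA (B u v) + ip (A u v) LB).
Proof.
  intros [a0 [a1 [a2 a3]]] [b0 [b1 [b2 b3]]]. unfold ip.
  eapply DL_eq.
  - apply DL_plus; [apply DL_plus; [apply DL_plus; [apply DL_opp; apply DL_mult; eassumption|]|]|];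
    apply DL_mult; eassumption.
  - cbv beta; ring.
Qed.

Lemma smooth_D1 U g : smooth_on U g -> smooth_on U (D1 g).
Proof. intros H k. destruct (H (S k)) as [_ [_ [h _]]]. exact h. Qed.
Lemma smooth_D2 U g : smooth_on U g -> smooth_on U (D2 g).
Proof. intros H k. destruct (H (S k)) as [_ [_ [_ h]]]. exact h. Qed.
Lemma smooth_Dpart U g j : smooth_on U g -> smooth_on U (Dpart j g).
Proof. destruct j; [apply smooth_D1 | apply smooth_D2]. Qed.
Lemma smooth_cont U g : smooth_on U g -> cont2 U g.
Proof. intros H. exact (H O). Qed.

Lemma DL_smooth U g j u v : smooth_on U g -> U u v -> DL j g u v (Dpart j g u v).
Proof.
  intros H Hu. destruct (H 1%nat) as [_ [Hex _]]. destruct (Hex u v Hu) as [[l1 h1] [l2 h2]].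
  destruct j.
  - assert (E : DL 0 g u v l1) by exact h1. rewrite (DL_Dpart _ _ _ _ _ E). exact E.
  - assert (E : DL (S j) g u v l2) by exact h2. rewrite (DL_Dpart _ _ _ _ _ E). exact E.
Qed.

Lemma smooth_dpart U h j : smooth_map_on U h -> smooth_map_on U (dpart h j).
Proof.
  intros [s0 [s1 [s2 s3]]]. destruct j; simpl; unfold VD1, VD2; simpl;
  repeat split; first [apply smooth_D1 | apply smooth_D2]; assumption.
Qed.

Lemma VDL_smooth U h j u v : smooth_map_on U h -> U u v -> VDL j h u v (dpart h j u v).
Proof.
  intros [s0 [s1 [s2 s3]]] Hu.
  assert (E : forall a, a = 0%nat \/ a = 1%nat \/ a = 2%nat \/ a = 3%nat -> True) by auto.
  repeat split.
  - replace (c0 (dpart h j u v)) with (Dpart j (fun x y => c0 (h x y)) u v) by (destruct j; reflexivity).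
    apply (DL_smooth U); auto.
  - replace (c1 (dpart h j u v)) with (Dpart j (fun x y => c1 (h x y)) u v) by (destruct j; reflexivity).
    apply (DL_smooth U); auto.
  - replace (c2 (dpart h j u v)) with (Dpart j (fun x y => c2 (h x y)) u v) by (destruct j; reflexivity).
    apply (DL_smooth U); auto.
  - replace (c3 (dpart h j u v)) with (Dpart j (fun x y => c3 (h x y)) u v) by (destruct j; reflexivity).
    apply (DL_smooth U); auto.
Qed.

Lemma near_line U j u v : open2 U -> U u v ->
  exists r, 0 < r /\ forall t, Rabs (t - lpt j u v) < r -> lineF j U u v t.
Proof.
  intros HU Hu. destruct (HU u v Hu) as [r [Hr H]]. exists r; split; auto.
  destruct j; simpl; intros t Ht; apply H; auto; unfold Rminus; rewrite Rplus_opp_r, Rabs_R0; auto.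
Qed.

Lemma DL_ext U j g h u v l : open2 U -> U u v -> (forall x y, U x y -> g x y = h x y) ->
  DL j h u v l -> DL j g u v l.
Proof.
  intros HU Hu E H. unfold DL in *. apply is_derive_Reals. apply is_derive_Reals in H.
  apply (is_derive_ext_loc (lineF j h u v)); auto.
  destruct (near_line U j u v HU Hu) as [r [Hr Hn]]. exists (mkposreal r Hr). intros t Ht.
  specialize (Hn t Ht). destruct j; simpl in *; symmetry; apply E; auto.
Qed.

Lemma DL_zero U j g u v : open2 U -> U u v -> (forall x y, U x y -> g x y = 0) ->
  Dpart j g u v = 0.
Proof.
  intros HU Hu E. apply DL_Dpart. apply (DL_ext U j g (fun _ _ => 0)); auto. apply DL_const.
Qed.

Lemma is_derive_line U j g u v : smooth_on U g -> U u v ->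
  is_derive (lineF j g u v) (lpt j u v) (Dpart j g u v).
Proof. intros. apply is_derive_Reals. apply (DL_smooth U); auto. Qed.

Lemma loc_line U j u v (P : R -> R -> Prop) : open2 U -> U u v -> (forall x y, U x y -> P x y) ->
  locally (lpt j u v) (lineF j P u v).
Proof.
  intros HU Hu HP. destruct (near_line U j u v HU Hu) as [r [Hr Hn]]. exists (mkposreal r Hr).
  intros t Ht. specialize (Hn t Ht). destruct j; simpl in *; apply HP; auto.
Qed.

Lemma mixed12 U g a b : open2 U -> smooth_on U g -> U a b ->
  Derive (fun z => Derive (fun t => g z t) b) a = D1 (D2 g) a b /\
  ex_derive (fun z => Derive (fun t => g z t) b) a.
Proof.
  intros HU Hs Hab.
  assert (L : locally a (fun z => D2 g z b = Derive (fun t => g z t) b)).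
  { apply (loc_line U 0 a b (fun x y => D2 g x y = Derive (fun t => g x t) y) HU Hab).
    intros x y Hxy. symmetry. apply is_derive_unique. exact (is_derive_line U 1 g x y Hs Hxy). }
  split.
  - etransitivity; [symmetry; exact (Derive_ext_loc _ _ _ L)|]. apply is_derive_unique.
    exact (is_derive_line U 0 (D2 g) a b (smooth_D2 U g Hs) Hab).
  - apply (ex_derive_ext_loc _ _ _ L). eexists.
    exact (is_derive_line U 0 (D2 g) a b (smooth_D2 U g Hs) Hab).
Qed.

Lemma mixed21 U g a b : open2 U -> smooth_on U g -> U a b ->
  Derive (fun z => Derive (fun t => g t z) a) b = D2 (D1 g) a b /\
  ex_derive (fun z => Derive (fun t => g t z) a) b.
Proof.
  intros HU Hs Hab.
  assert (L : locally b (fun z => D1 g a z = Derive (fun t => g t z) a)).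
  { apply (loc_line U 1 a b (fun x y => D1 g x y = Derive (fun t => g t y) x) HU Hab).
    intros x y Hxy. symmetry. apply is_derive_unique. exact (is_derive_line U 0 g x y Hs Hxy). }
  split.
  - etransitivity; [symmetry; exact (Derive_ext_loc _ _ _ L)|]. apply is_derive_unique.
    exact (is_derive_line U 1 (D1 g) a b (smooth_D1 U g Hs) Hab).
  - apply (ex_derive_ext_loc _ _ _ L). eexists.
    exact (is_derive_line U 1 (D1 g) a b (smooth_D1 U g Hs) Hab).
Qed.

Lemma schwarz U g u v : open2 U -> smooth_on U g -> U u v -> D1 (D2 g) u v = D2 (D1 g) u v.
Proof.
  intros HU Hs Hu.
  destruct (HU u v Hu) as [r [Hr Hbox]].
  destruct (mixed12 U g u v HU Hs Hu) as [E1 _]. destruct (mixed21 U g u v HU Hs Hu) as [E2 _].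
  rewrite <- E1, <- E2. apply Schwarz.
  - exists (mkposreal r Hr). intros a b Ha Hb. simpl in *. specialize (Hbox a b Ha Hb).
    repeat split.
    + eexists. exact (is_derive_line U 0 g a b Hs Hbox).
    + eexists. exact (is_derive_line U 1 g a b Hs Hbox).
    + exact (proj2 (mixed12 U g a b HU Hs Hbox)).
    + exact (proj2 (mixed21 U g a b HU Hs Hbox)).
  - intros eps. destruct (smooth_cont U _ (smooth_D1 U _ (smooth_D2 U g Hs)) u v Hu eps (cond_pos eps)) as [d [Hd Hc]].
    exists (mkposreal (Rmin d r) (Rmin_pos _ _ Hd Hr)). intros a b Ha Hb. simpl in *.
    assert (Hab : U a b) by (apply Hbox; eapply Rlt_le_trans; eauto; apply Rmin_r).
    rewrite (proj1 (mixed12 U g a b HU Hs Hab)), E1.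
    apply Hc; eapply Rlt_le_trans; eauto; apply Rmin_l.
  - intros eps. destruct (smooth_cont U _ (smooth_D2 U _ (smooth_D1 U g Hs)) u v Hu eps (cond_pos eps)) as [d [Hd Hc]].
    exists (mkposreal (Rmin d r) (Rmin_pos _ _ Hd Hr)). intros a b Ha Hb. simpl in *.
    assert (Hab : U a b) by (apply Hbox; eapply Rlt_le_trans; eauto; apply Rmin_r).
    rewrite (proj1 (mixed21 U g a b HU Hs Hab)), E2.
    apply Hc; eapply Rlt_le_trans; eauto; apply Rmin_l.
Qed.
Lemma ip_sym a b : ip a b = ip b a.
Proof. unfold ip; ring. Qed.
Lemma ip_add_l a b c : ip (vadd a b) c = ip a c + ip b c.
Proof. unfold ip, vadd; simpl; ring. Qed.
Lemma ip_add_r a b c : ip c (vadd a b) = ip c a + ip c b.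
Proof. unfold ip, vadd; simpl; ring. Qed.
Lemma ip_scal_l r a c : ip (vscal r a) c = r * ip a c.
Proof. unfold ip, vscal; simpl; ring. Qed.
Lemma ip_scal_r r a c : ip c (vscal r a) = r * ip c a.
Proof. unfold ip, vscal; simpl; ring. Qed.
Lemma ip_sub_l a b c : ip (vsub a b) c = ip a c - ip b c.
Proof. unfold ip, vsub, vadd, vscal; simpl; ring. Qed.
Lemma ip_sub_r a b c : ip c (vsub a b) = ip c a - ip c b.
Proof. unfold ip, vsub, vadd, vscal; simpl; ring. Qed.

Lemma detg_eq f u v : detg f u v =
  ip (VD1 f u v) (VD1 f u v) * ip (VD2 f u v) (VD2 f u v) - ip (VD1 f u v) (VD2 f u v) * ip (VD1 f u v) (VD2 f u v).
Proof. reflexivity. Qed.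


Definition dt (a b : V4) := ip a a * ip b b - ip a b * ip a b.
Definition tc0 (a b A : V4) := ip b b / dt a b * ip A a + - ip a b / dt a b * ip A b.
Definition tc1 (a b A : V4) := - ip a b / dt a b * ip A a + ip a a / dt a b * ip A b.
Definition tpj (a b A : V4) := vadd (vscal (tc0 a b A) a) (vscal (tc1 a b A) b).

Lemma tproj_eq f A u v : tproj f A u v = tpj (VD1 f u v) (VD2 f u v) A.
Proof. reflexivity. Qed.
Lemma tcoord_eq f A u v : tcoord f A u v = (tc0 (VD1 f u v) (VD2 f u v) A, tc1 (VD1 f u v) (VD2 f u v) A).
Proof. reflexivity. Qed.
Lemma nproj_eq f A u v : nproj f A u v = vsub A (tpj (VD1 f u v) (VD2 f u v) A).
Proof. reflexivity. Qed.

Lemma tpj_perp a b A : dt a b <> 0 ->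
  ip a (vsub A (tpj a b A)) = 0 /\ ip b (vsub A (tpj a b A)) = 0.
Proof.
  intro Hd. unfold tpj, tc0, tc1. rewrite !ip_sub_r, !ip_add_r, !ip_scal_r.
  rewrite (ip_sym a A), (ip_sym b A), (ip_sym b a). unfold dt in *.
  split; field; exact Hd.
Qed.

Lemma F2sym U f i j x y : open2 U -> smooth_map_on U f -> U x y ->
  dpart (dpart f i) j x y = dpart (dpart f j) i x y.
Proof.
  intros HU [s0 [s1 [s2 s3]]] Hxy.
  destruct i as [|i], j as [|j]; try reflexivity; simpl; unfold VD1, VD2; simpl; f_equal.
  all: first [ exact (eq_sym (schwarz U _ x y HU s0 Hxy)) | exact (eq_sym (schwarz U _ x y HU s1 Hxy))
             | exact (eq_sym (schwarz U _ x y HU s2 Hxy)) | exact (eq_sym (schwarz U _ x y HU s3 Hxy))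
             | exact (schwarz U _ x y HU s0 Hxy) | exact (schwarz U _ x y HU s1 Hxy)
             | exact (schwarz U _ x y HU s2 Hxy) | exact (schwarz U _ x y HU s3 Hxy) ].
Qed.

Lemma Dpart_ext U j g h u v : open2 U -> U u v -> smooth_on U h ->
  (forall x y, U x y -> g x y = h x y) -> Dpart j g u v = Dpart j h u v.
Proof.
  intros HU Hu Hh E. apply DL_Dpart. apply (DL_ext U j g h); auto. apply (DL_smooth U); auto.
Qed.

Lemma third_sym1 U g u v : open2 U -> smooth_on U g -> U u v ->
  D1 (D2 (D2 g)) u v = D2 (D2 (D1 g)) u v.
Proof.
  intros HU Hs Hu. rewrite (schwarz U (D2 g) u v HU (smooth_D2 U g Hs) Hu).
  apply (Dpart_ext U 1 (D1 (D2 g)) (D2 (D1 g)) u v HU Hu).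
  - apply smooth_D2, smooth_D1; auto.
  - intros x y Hxy. apply (schwarz U g x y HU Hs Hxy).
Qed.

Lemma F3sym U f u v : open2 U -> smooth_map_on U f -> U u v ->
  dpart (dpart (dpart f 1) 1) 0 u v = dpart (dpart (dpart f 0) 1) 1 u v.
Proof.
  intros HU [s0 [s1 [s2 s3]]] Hu. simpl; unfold VD1, VD2; simpl; f_equal.
  - exact (third_sym1 U _ u v HU s0 Hu).
  - exact (third_sym1 U _ u v HU s1 Hu).
  - exact (third_sym1 U _ u v HU s2 Hu).
  - exact (third_sym1 U _ u v HU s3 Hu).
Qed.

Definition gD f j a b u v :=
  ip (dpart (dpart f a) j u v) (dpart f b u v) + ip (dpart f a u v) (dpart (dpart f b) j u v).

Lemma DL_gm U f j a b u v : smooth_map_on U f -> U u v -> DL j (gm f a b) u v (gD f j a b u v).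
Proof.
  intros Hs Hu. unfold gm, gD.
  apply DL_ip; apply (VDL_smooth U); auto; apply smooth_dpart; auto.
Qed.

Lemma gm_D U f k i j x y : smooth_map_on U f -> U x y ->
  Dpart k (gm f i j) x y = gD f k i j x y.
Proof. intros. apply DL_Dpart. apply (DL_gm U); auto. Qed.

Definition detD f j u v :=
  gD f j 0 0 u v * gm f 1 1 u v + gm f 0 0 u v * gD f j 1 1 u v
  - (gD f j 0 1 u v * gm f 0 1 u v + gm f 0 1 u v * gD f j 0 1 u v).

Lemma DL_detg U f j u v : smooth_map_on U f -> U u v -> DL j (detg f) u v (detD f j u v).
Proof.
  intros Hs Hu. unfold detg, detD.
  apply DL_minus; apply DL_mult; apply (DL_gm U); auto.
Qed.

Definition ginvD f j k l u v :=
  match k, l with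
  | O, O => (gD f j 1 1 u v * detg f u v - detD f j u v * gm f 1 1 u v) / (detg f u v)²
  | S _, S _ => (gD f j 0 0 u v * detg f u v - detD f j u v * gm f 0 0 u v) / (detg f u v)²
  | _, _ => (- gD f j 0 1 u v * detg f u v - detD f j u v * - gm f 0 1 u v) / (detg f u v)²
  end.

Lemma DL_ginv U f j k l u v : smooth_map_on U f -> U u v -> detg f u v <> 0 ->
  DL j (ginv f k l) u v (ginvD f j k l u v).
Proof.
  intros Hs Hu Hd. destruct k as [|k], l as [|l]; unfold ginv, ginvD.
  - apply DL_div; auto; [apply (DL_gm U) | apply (DL_detg U)]; auto.
  - apply DL_div; auto; [apply DL_opp; apply (DL_gm U) | apply (DL_detg U)]; auto.
  - apply DL_div; auto; [apply DL_opp; apply (DL_gm U) | apply (DL_detg U)]; auto.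
  - apply DL_div; auto; [apply (DL_gm U) | apply (DL_detg U)]; auto.
Qed.

Lemma Gam_closed U f k i j x y : open2 U -> smooth_map_on U f -> U x y ->
  Gam f k i j x y = ginv f k 0 x y * ip (dpart (dpart f i) j x y) (dpart f 0 x y)
                  + ginv f k 1 x y * ip (dpart (dpart f i) j x y) (dpart f 1 x y).
Proof.
  intros HU Hs Hxy. unfold Gam, sum2. rewrite !(gm_D U f _ _ _ x y Hs Hxy). unfold gD.
  rewrite (F2sym U f j i x y HU Hs Hxy), (F2sym U f 0 i x y HU Hs Hxy), (F2sym U f 0 j x y HU Hs Hxy),
    (F2sym U f 1 i x y HU Hs Hxy), (F2sym U f 1 j x y HU Hs Hxy).
  rewrite (ip_sym (dpart f j x y) (dpart (dpart f i) 0 x y)), (ip_sym (dpart f j x y) (dpart (dpart f i) 1 x y)).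
  field.
Qed.

Lemma GamD U f j k i i' u v : open2 U -> smooth_map_on U f -> U u v -> detg f u v <> 0 ->
  Dpart j (Gam f k i i') u v =
    ginvD f j k 0 u v * ip (dpart (dpart f i) i' u v) (dpart f 0 u v)
    + ginv f k 0 u v * (ip (dpart (dpart (dpart f i) i') j u v) (dpart f 0 u v)
                       + ip (dpart (dpart f i) i' u v) (dpart (dpart f 0) j u v))
  + (ginvD f j k 1 u v * ip (dpart (dpart f i) i' u v) (dpart f 1 u v)
    + ginv f k 1 u v * (ip (dpart (dpart (dpart f i) i') j u v) (dpart f 1 u v)
                       + ip (dpart (dpart f i) i' u v) (dpart (dpart f 1) j u v))).
Proof.
  intros HU Hs Hu Hd. apply DL_Dpart.
  apply (DL_ext U j _ (fun x y => ginv f k 0 x y * ip (dpart (dpart f i) i' x y) (dpart f 0 x y)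
                  + ginv f k 1 x y * ip (dpart (dpart f i) i' x y) (dpart f 1 x y))); auto.
  { intros x y Hxy. apply (Gam_closed U); auto. }
  apply DL_plus; apply DL_mult; try (apply (DL_ginv U); auto);
    apply DL_ip; apply (VDL_smooth U); auto; repeat apply smooth_dpart; auto.
Qed.

Ltac ipnorm L :=
  match L with
  | nil => idtac
  | cons ?X ?rest =>
      let rec go R := match R with nil => idtac | cons ?Y ?r => rewrite ?(ip_sym Y X); go r end in
      go rest; ipnorm rest
  end.

Lemma gauss U f u v : open2 U -> smooth_map_on U f -> U u v -> detg f u v <> 0 ->
  Riem1212 f u v = ip (IIb f 0 0 u v) (IIb f 1 1 u v) - ip (IIb f 0 1 u v) (IIb f 0 1 u v).
Proof.
  intros HU Hs Hu Hd.
  unfold Riem1212, sum2.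
  change (D1 (Gam f 0 1 1) u v) with (Dpart 0 (Gam f 0 1 1) u v).
  change (D1 (Gam f 1 1 1) u v) with (Dpart 0 (Gam f 1 1 1) u v).
  change (D2 (Gam f 0 0 1) u v) with (Dpart 1 (Gam f 0 0 1) u v).
  change (D2 (Gam f 1 0 1) u v) with (Dpart 1 (Gam f 1 0 1) u v).
  rewrite !(GamD U f); auto.
  rewrite !(Gam_closed U f _ _ _ u v); auto.
  unfold IIb. rewrite !nproj_eq.
  assert (E1 : VD1 (VD2 f) u v = VD2 (VD1 f) u v) by exact (F2sym U f 1 0 u v HU Hs Hu).
  assert (E3 : VD1 (VD2 (VD2 f)) u v = VD2 (VD2 (VD1 f)) u v) by exact (F3sym U f u v HU Hs Hu).
  rewrite detg_eq in Hd.
  unfold ginvD, ginv, detD, gD, detg, gm.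
  cbv beta iota delta [dpart].
  rewrite ?E1, ?E3.
  unfold tpj, tc0, tc1, dt.
  rewrite ?ip_sub_l, ?ip_sub_r, ?ip_add_l, ?ip_add_r, ?ip_scal_l, ?ip_scal_r.
  set (a := VD1 f u v) in *. set (b := VD2 f u v) in *.
  set (A00 := VD1 (VD1 f) u v) in *. set (A01 := VD2 (VD1 f) u v) in *.
  set (A11 := VD2 (VD2 f) u v) in *. set (T3 := VD2 (VD2 (VD1 f)) u v) in *.
  ipnorm (cons a (cons b (cons A00 (cons A01 (cons A11 (cons T3 nil)))))).
  unfold Rsqr. field. exact Hd.
Qed.

Lemma VDL_add j A B u v LA LB : VDL j A u v LA -> VDL j B u v LB ->
  VDL j (fun x y => vadd (A x y) (B x y)) u v (vadd LA LB).
Proof.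
  intros [a0 [a1 [a2 a3]]] [b0 [b1 [b2 b3]]]; unfold vadd; simpl.
  repeat split; apply DL_plus; assumption.
Qed.

Lemma VDL_scal j s A u v ls LA : DL j s u v ls -> VDL j A u v LA ->
  VDL j (fun x y => vscal (s x y) (A x y)) u v (vadd (vscal ls (A u v)) (vscal (s u v) LA)).
Proof.
  intros Hs [a0 [a1 [a2 a3]]]; unfold vadd, vscal; simpl.
  repeat split; apply DL_mult; assumption.
Qed.

Lemma VDL_const j C u v : VDL j (fun _ _ => C) u v vzero.
Proof. repeat split; apply DL_const. Qed.

Lemma factA U f Z j u v : open2 U -> smooth_map_on U f -> U u v -> detg f u v <> 0 ->
  (forall x y, U x y -> ip (tproj f Z x y) (tproj f Z x y) = 0) ->
  fst (tcoord f Z u v) * ip (IIb f 0 j u v) (nproj f Z u v)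
  + snd (tcoord f Z u v) * ip (IIb f 1 j u v) (nproj f Z u v) = 0.
Proof.
  intros HU Hs Hu Hd Hn.
  assert (HT : forall k, DL j (fun x y => sum2 (fun l => ginv f k l x y * ip Z (dpart f l x y))) u v
     (sum2 (fun l => ginvD f j k l u v * ip Z (dpart f l u v)
                      + ginv f k l u v * (ip vzero (dpart f l u v) + ip Z (dpart (dpart f l) j u v))))).
  { intro k. unfold sum2. apply DL_plus; apply DL_mult; try (apply (DL_ginv U); auto);
      apply DL_ip; try apply VDL_const; apply (VDL_smooth U); auto; apply smooth_dpart; auto. }
  assert (HX : VDL j (fun x y => tproj f Z x y) u v
     (vadd (vadd (vscal (sum2 (fun l => ginvD f j 0 l u v * ip Z (dpart f l u v)
                      + ginv f 0 l u v * (ip vzero (dpart f l u v) + ip Z (dpart (dpart f l) j u v)))) (VD1 f u v))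
                 (vscal (fst (tcoord f Z u v)) (dpart (VD1 f) j u v)))
           (vadd (vscal (sum2 (fun l => ginvD f j 1 l u v * ip Z (dpart f l u v)
                      + ginv f 1 l u v * (ip vzero (dpart f l u v) + ip Z (dpart (dpart f l) j u v)))) (VD2 f u v))
                 (vscal (snd (tcoord f Z u v)) (dpart (VD2 f) j u v))))).
  { unfold tproj, tv, tcoord. cbv beta iota delta [fst snd].
    apply VDL_add; apply VDL_scal; try apply HT.
    all: apply (VDL_smooth U); auto; first [exact (smooth_dpart U f 0 Hs) | exact (smooth_dpart U f 1 Hs)]. }
  pose proof (DL_ip j _ _ u v _ _ HX HX) as Hphi.
  pose proof (DL_Dpart _ _ _ _ _ Hphi) as E.
  cbv beta in E.
  rewrite (DL_zero U j (fun x y => ip (tproj f Z x y) (tproj f Z x y)) u v HU Hu Hn) in E.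
  match type of E with 0 = ?P => assert (EP : P = 2 * (fst (tcoord f Z u v) * ip (IIb f 0 j u v) (nproj f Z u v)
  + snd (tcoord f Z u v) * ip (IIb f 1 j u v) (nproj f Z u v))) end.
  2: lra.
  unfold IIb. rewrite !nproj_eq, !tproj_eq.
  rewrite detg_eq in Hd.
  unfold tcoord, ginvD, ginv, detD, gD, detg, gm, sum2.
  cbn [dpart fst snd].
  unfold tpj, tc0, tc1, dt.
  rewrite ?ip_sub_l, ?ip_sub_r, ?ip_add_l, ?ip_add_r, ?ip_scal_l, ?ip_scal_r.
  assert (Z0 : forall x, ip vzero x = 0) by (intro; unfold ip, vzero; simpl; ring).
  rewrite ?Z0.
  set (a := VD1 f u v) in *. set (b := VD2 f u v) in *.
  set (A0 := dpart (VD1 f) j u v) in *. set (A1 := dpart (VD2 f) j u v) in *.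
  ipnorm (cons a (cons b (cons A0 (cons A1 (cons Z nil))))).
  unfold Rsqr. field. exact Hd.
Qed.
Definition det4 (a b c d : V4) : R :=
  let '(mkV4 a0 a1 a2 a3) := a in let '(mkV4 b0 b1 b2 b3) := b in
  let '(mkV4 c0 c1 c2 c3) := c in let '(mkV4 d0 d1 d2 d3) := d in
  a0*(b1*(c2*d3-c3*d2)-b2*(c1*d3-c3*d1)+b3*(c1*d2-c2*d1))
 -a1*(b0*(c2*d3-c3*d2)-b2*(c0*d3-c3*d0)+b3*(c0*d2-c2*d0))
 +a2*(b0*(c1*d3-c3*d1)-b1*(c0*d3-c3*d0)+b3*(c0*d1-c1*d0))
 -a3*(b0*(c1*d2-c2*d1)-b1*(c0*d2-c2*d0)+b2*(c0*d1-c1*d0)).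

Definition gdet (aa ab ac ad bb bc bd cc cd dd : R) : R :=
  aa*(bb*(cc*dd-cd*cd)-bc*(bc*dd-cd*bd)+bd*(bc*cd-cc*bd))
 -ab*(ab*(cc*dd-cd*cd)-bc*(ac*dd-cd*ad)+bd*(ac*cd-cc*ad))
 +ac*(ab*(bc*dd-cd*bd)-bb*(ac*dd-cd*ad)+bd*(ac*bd-bc*ad))
 -ad*(ab*(bc*cd-cc*bd)-bb*(ac*cd-cc*ad)+bc*(ac*bd-bc*ad)).

Lemma cauchy_binet a b c d :
  det4 a b c d * det4 a b c d =
  - gdet (ip a a) (ip a b) (ip a c) (ip a d) (ip b b) (ip b c) (ip b d) (ip c c) (ip c d) (ip d d).
Proof. destruct a, b, c, d; unfold gdet, det4, ip; simpl. ring. Qed.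

Lemma complete4 a b c d R :
  det4 a b c d <> 0 ->
  ip a R = 0 -> ip b R = 0 -> ip c R = 0 -> ip d R = 0 -> R = vzero.
Proof.
  intros Hd ha hb hc hd.
  destruct a as [a0 a1 a2 a3], b as [b0 b1 b2 b3], c as [e0 e1 e2 e3], d as [d0 d1 d2 d3], R as [r0 r1 r2 r3].
  unfold ip in *; simpl in *.
  set (D := det4 (mkV4 a0 a1 a2 a3) (mkV4 b0 b1 b2 b3) (mkV4 e0 e1 e2 e3) (mkV4 d0 d1 d2 d3)) in *.
  assert (E0 : D * r0 = 0).
  { assert (D * (-r0) = det4 (mkV4 (- (a0*r0)+a1*r1+a2*r2+a3*r3) a1 a2 a3) (mkV4 (- (b0*r0)+b1*r1+b2*r2+b3*r3) b1 b2 b3)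
       (mkV4 (- (e0*r0)+e1*r1+e2*r2+e3*r3) e1 e2 e3) (mkV4 (- (d0*r0)+d1*r1+d2*r2+d3*r3) d1 d2 d3)) by (unfold D, det4; ring).
    rewrite ha, hb, hc, hd in H. unfold det4 in H. lra. }
  assert (E1 : D * r1 = 0).
  { assert (D * r1 = det4 (mkV4 a0 (- (a0*r0)+a1*r1+a2*r2+a3*r3) a2 a3) (mkV4 b0 (- (b0*r0)+b1*r1+b2*r2+b3*r3) b2 b3)
       (mkV4 e0 (- (e0*r0)+e1*r1+e2*r2+e3*r3) e2 e3) (mkV4 d0 (- (d0*r0)+d1*r1+d2*r2+d3*r3) d2 d3)) by (unfold D, det4; ring).
    rewrite ha, hb, hc, hd in H. unfold det4 in H. lra. }
  assert (E2 : D * r2 = 0).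
  { assert (D * r2 = det4 (mkV4 a0 a1 (- (a0*r0)+a1*r1+a2*r2+a3*r3) a3) (mkV4 b0 b1 (- (b0*r0)+b1*r1+b2*r2+b3*r3) b3)
       (mkV4 e0 e1 (- (e0*r0)+e1*r1+e2*r2+e3*r3) e3) (mkV4 d0 d1 (- (d0*r0)+d1*r1+d2*r2+d3*r3) d3)) by (unfold D, det4; ring).
    rewrite ha, hb, hc, hd in H. unfold det4 in H. lra. }
  assert (E3 : D * r3 = 0).
  { assert (D * r3 = det4 (mkV4 a0 a1 a2 (- (a0*r0)+a1*r1+a2*r2+a3*r3)) (mkV4 b0 b1 b2 (- (b0*r0)+b1*r1+b2*r2+b3*r3))
       (mkV4 e0 e1 e2 (- (e0*r0)+e1*r1+e2*r2+e3*r3)) (mkV4 d0 d1 d2 (- (d0*r0)+d1*r1+d2*r2+d3*r3))) by (unfold D, det4; ring).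
    rewrite ha, hb, hc, hd in H. unfold det4 in H. lra. }
  unfold vzero; f_equal;
  (apply (Rmult_eq_reg_l D); [rewrite Rmult_0_r; assumption | exact Hd]).
Qed.

Lemma timelike_perp t N : ip t t < 0 -> ip N t = 0 -> N <> vzero -> 0 < ip N N.
Proof.
  destruct t as [t0 t1 t2 t3], N as [n0 n1 n2 n3]; unfold ip; simpl; intros Ht HN Hz.
  assert (Hs : (n0*t0)^2 <= (n1^2+n2^2+n3^2)*(t1^2+t2^2+t3^2)).
  { replace (n0*t0) with (n1*t1+n2*t2+n3*t3) by lra.
    assert (0 <= (n1*t2-n2*t1)^2 + (n1*t3-n3*t1)^2 + (n2*t3-n3*t2)^2).
    { repeat apply Rplus_le_le_0_compat; apply pow2_ge_0. }
    assert (Hl : (n1^2+n2^2+n3^2)*(t1^2+t2^2+t3^2) = (n1*t1+n2*t2+n3*t3)^2 + ((n1*t2-n2*t1)^2 + (n1*t3-n3*t1)^2 + (n2*t3-n3*t2)^2)) by ring.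
    lra. }
  destruct (Req_dec (n1^2+n2^2+n3^2) 0) as [E|E].
  - exfalso. apply Hz. assert (n1 = 0) by nra. assert (n2 = 0) by nra. assert (n3 = 0) by nra.
    subst. assert (n0 * t0 = 0) by lra. assert (t0 <> 0) by nra.
    assert (n0 = 0) by (apply (Rmult_eq_reg_r t0); lra). subst; reflexivity.
  - assert (0 < n1^2+n2^2+n3^2) by nra.
    assert (n0^2*t0^2 < (n1^2+n2^2+n3^2)*t0^2) by nra.
    assert (n0^2 < n1^2+n2^2+n3^2) by nra. nra.
Qed.

Lemma II_eq f p q u v : II f p q u v =
  vadd (vadd (vscal (fst p * fst q) (IIb f 0 0 u v)) (vscal (fst p * snd q) (IIb f 0 1 u v)))
       (vadd (vscal (snd p * fst q) (IIb f 1 0 u v)) (vscal (snd p * snd q) (IIb f 1 1 u v))).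
Proof. reflexivity. Qed.

Lemma tv_eq f p u v : tv f p u v = vadd (vscal (fst p) (VD1 f u v)) (vscal (snd p) (VD2 f u v)).
Proof. reflexivity. Qed.

Lemma vsub_zero A B : vsub A B = vzero -> A = B.
Proof.
  destruct A, B; unfold vsub, vadd, vscal, vzero; simpl; intro H; injection H; intros.
  f_equal; lra.
Qed.

Lemma gsub g00 g01 g11 t0 t1 w0 w1 :
  t0*t0*g00 + 2*t0*t1*g01 + t1*t1*g11 = 0 ->
  w0*w0*g00 + 2*w0*w1*g01 + w1*w1*g11 = 0 ->
  t0*w0*g00 + (t0*w1+t1*w0)*g01 + t1*w1*g11 = -1 ->
  (t0 <> 0 \/ t1 <> 0) ->
  (t0*w1 - t1*w0) <> 0 /\ g00 = 2*t1*w1/(t0*w1 - t1*w0)^2 /\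
  g01 = -(t0*w1+t1*w0)/(t0*w1 - t1*w0)^2 /\ g11 = 2*t0*w0/(t0*w1 - t1*w0)^2.
Proof.
  intros C1 C2 C3 HT.
  set (M00 := t0*t0*g00 + 2*t0*t1*g01 + t1*t1*g11) in *.
  set (M11 := w0*w0*g00 + 2*w0*w1*g01 + w1*w1*g11) in *.
  set (M01 := t0*w0*g00 + (t0*w1+t1*w0)*g01 + t1*w1*g11) in *.
  set (p := t0*w1 - t1*w0).
  assert (Hp : p <> 0).
  { intro Hp0.
    assert (e0 : t0 * M01 - w0 * M00 = (t0*g01 + t1*g11) * p) by (unfold M01, M00, p; ring).
    assert (e1 : t1 * M01 - w1 * M00 = - (t0*g00 + t1*g01) * p) by (unfold M01, M00, p; ring).
    rewrite Hp0 in e0, e1.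
    rewrite C1, C3 in *. destruct HT; lra. }
  assert (E00 : g00 * p^2 = w1^2*M00 - 2*w1*t1*M01 + t1^2*M11) by (unfold M00, M01, M11, p; ring).
  assert (E01 : g01 * p^2 = -w1*w0*M00 + (w1*t0 + t1*w0)*M01 - t1*t0*M11) by (unfold M00, M01, M11, p; ring).
  assert (E11 : g11 * p^2 = w0^2*M00 - 2*w0*t0*M01 + t0^2*M11) by (unfold M00, M01, M11, p; ring).
  rewrite C1, C2, C3 in *.
  assert (p^2 <> 0) by (apply pow_nonzero; exact Hp).
  repeat split; auto.
  - apply (Rmult_eq_reg_r (p^2)); auto. rewrite E00. field. auto.
  - apply (Rmult_eq_reg_r (p^2)); auto. rewrite E01. field. auto.
  - apply (Rmult_eq_reg_r (p^2)); auto. rewrite E11. field. auto.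
Qed.

Ltac ipexp := repeat first [rewrite ip_sub_l | rewrite ip_sub_r | rewrite ip_add_l | rewrite ip_add_r | rewrite ip_scal_l | rewrite ip_scal_r].

Lemma Ash_eq f xi p u v : IIb f 1 0 u v = IIb f 0 1 u v ->
  Ash f xi p u v =
  (ginv f 0 0 u v * (fst p * ip (IIb f 0 0 u v) xi + snd p * ip (IIb f 0 1 u v) xi)
   + ginv f 0 1 u v * (fst p * ip (IIb f 0 1 u v) xi + snd p * ip (IIb f 1 1 u v) xi),
   ginv f 1 0 u v * (fst p * ip (IIb f 0 0 u v) xi + snd p * ip (IIb f 0 1 u v) xi)
   + ginv f 1 1 u v * (fst p * ip (IIb f 0 1 u v) xi + snd p * ip (IIb f 1 1 u v) xi)).
Proof.
  intro E. unfold Ash, sum2. rewrite !II_eq. cbn [basis fst snd]. rewrite E. ipexp.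
  f_equal; ring.
Qed.

Lemma ip_tv f p q u v : ip (tv f p u v) (tv f q u v) =
  fst p * fst q * ip (VD1 f u v) (VD1 f u v) + (fst p * snd q + snd p * fst q) * ip (VD1 f u v) (VD2 f u v)
  + snd p * snd q * ip (VD2 f u v) (VD2 f u v).
Proof. rewrite !tv_eq. ipexp. rewrite (ip_sym (VD2 f u v) (VD1 f u v)). ring. Qed.

Theorem mainTheorem14
  (U : R -> R -> Prop) (f : R -> R -> V4) (Z : V4)
  (hU : open2 U)
  (hsmooth : smooth_map_on U f)
  (htimelike : forall u v, U u v -> detg f u v < 0)
  (hZ : ip Z Z = 1)
  (hnull : forall u v, U u v ->
     tproj f Z u v <> vzero /\ ip (tproj f Z u v) (tproj f Z u v) = 0)
  (hII : forall u v, U u v -> II f (ZT f Z u v) (ZT f Z u v) u v <> vzero) :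
  forall u v (w : R * R), U u v ->
    tv f w u v <> vzero -> ip (tv f w u v) (tv f w u v) = 0 ->
    ip (tproj f Z u v) (tv f w u v) = -1 ->
    let N := II f (ZT f Z u v) (ZT f Z u v) u v in
    let H := Hvec f u v in
    let K := Kgauss f u v in
    let kN := KN f Z w u v in
    let IIWW := II f w w u v in
    IIWW = vadd (vscal (kN / vnorm N) (nproj f Z u v))
                (vscal ((ip H H - K) / vnorm N) (nuv f Z u v))
    /\ ip IIWW IIWW * ip N N = (ip H H - K) ^ 2 + kN ^ 2.
Proof.
  intros u v w Hu Hw0 Hww HXw. cbv zeta.
  assert (Hd : detg f u v <> 0) by (specialize (htimelike u v Hu); lra).
  destruct (hnull u v Hu) as [HX0 HXX].
  assert (HA : forall j, fst (tcoord f Z u v) * ip (IIb f 0 j u v) (nproj f Z u v)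
       + snd (tcoord f Z u v) * ip (IIb f 1 j u v) (nproj f Z u v) = 0).
  { intro j. apply (factA U); auto. intros x y Hxy. apply (hnull x y Hxy). }
  assert (HG := gauss U f u v hU hsmooth Hu Hd).
  assert (E10 : IIb f 1 0 u v = IIb f 0 1 u v).
  { unfold IIb. rewrite (F2sym U f 1 0 u v hU hsmooth Hu). reflexivity. }
  assert (Hperp : forall A k, ip (dpart f k u v) (nproj f A u v) = 0).
  { intros A k. assert (Hd' : dt (VD1 f u v) (VD2 f u v) <> 0) by exact Hd.
    destruct (tpj_perp (VD1 f u v) (VD2 f u v) A Hd') as [h1 h2]. destruct k; [exact h1 | exact h2]. }
  assert (Pa : forall i j, ip (VD1 f u v) (IIb f i j u v) = 0) by (intros; apply (Hperp _ 0%nat)).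
  assert (Pb : forall i j, ip (VD2 f u v) (IIb f i j u v) = 0) by (intros; apply (Hperp _ 1%nat)).
  assert (Za : ip (VD1 f u v) (nproj f Z u v) = 0) by apply (Hperp _ 0%nat).
  assert (Zb : ip (VD2 f u v) (nproj f Z u v) = 0) by apply (Hperp _ 1%nat).
  assert (HIIN := hII u v Hu).
  unfold ZT in *.
  assert (EX : tproj f Z u v = tv f (tcoord f Z u v) u v) by reflexivity.
  rewrite EX in HX0, HXX, HXw.
  assert (EN : nuv f Z u v = vscal (/ vnorm (II f (tcoord f Z u v) (tcoord f Z u v) u v))
                               (II f (tcoord f Z u v) (tcoord f Z u v) u v)) by reflexivity.
  rewrite EN.
  unfold Kgauss; rewrite HG.
  assert (EH : Hvec f u v = vscal (/2) (vadd (vadd (vscal (ginv f 0 0 u v) (IIb f 0 0 u v)) (vscal (ginv f 0 1 u v) (IIb f 0 1 u v)))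
       (vadd (vscal (ginv f 1 0 u v) (IIb f 1 0 u v)) (vscal (ginv f 1 1 u v) (IIb f 1 1 u v))))) by reflexivity.
  unfold ZT in *.
  destruct w as [w0 w1].
  destruct (tcoord f Z u v) as [t0 t1] eqn:ET.
  cbn [fst snd] in HA.
  rewrite E10 in *.
  rewrite !tv_eq in HX0. rewrite !tv_eq in HXX. rewrite !tv_eq in HXw. rewrite !tv_eq in Hww. rewrite !tv_eq in Hw0.
  cbn [fst snd] in HX0, HXX, HXw, Hww, Hw0.
  set (a := VD1 f u v) in *. set (b := VD2 f u v) in *.
  set (P00 := IIb f 0 0 u v) in *. set (P01 := IIb f 0 1 u v) in *. set (P11 := IIb f 1 1 u v) in *.
  set (Zp := nproj f Z u v) in *.
  assert (HT : t0 <> 0 \/ t1 <> 0).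
  { destruct (Req_dec t0 0) as [e0|e0]; [|auto]. destruct (Req_dec t1 0) as [e1|e1]; [|auto].
    exfalso. apply HX0. subst. unfold vadd, vscal, vzero; simpl. f_equal; ring. }
  rewrite ?ip_add_l, ?ip_add_r, ?ip_scal_l, ?ip_scal_r in HXX.
  rewrite ?ip_add_l, ?ip_add_r, ?ip_scal_l, ?ip_scal_r in HXw.
  rewrite ?ip_add_l, ?ip_add_r, ?ip_scal_l, ?ip_scal_r in Hww.
  rewrite ?(ip_sym b a) in HXX, HXw, Hww.
  destruct (gsub (ip a a) (ip a b) (ip b b) t0 t1 w0 w1) as [Hp [Eg00 [Eg01 Eg11]]]; auto;
    [rewrite <- HXX; ring | rewrite <- Hww; ring | rewrite <- HXw; ring |].
  set (p := t0 * w1 - t1 * w0) in *.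
  assert (Hdt : detg f u v = ip a a * ip b b - ip a b * ip a b) by reflexivity.
  assert (Edt : ip a a * ip b b - ip a b * ip a b = - / p^2).
  { rewrite Eg00, Eg01, Eg11. unfold p. field. exact Hp. }
  set (Nv := II f (t0, t1) (t0, t1) u v) in *.
  set (W2 := II f (w0, w1) (w0, w1) u v) in *.
  assert (S2 : ip (Hvec f u v) (Hvec f u v) - (ip P00 P11 - ip P01 P01) / detg f u v = ip W2 Nv).
  { rewrite EH. unfold Nv, W2. rewrite !II_eq. rewrite E10. cbn [fst snd]. fold P00 P01 P11.
    unfold ginv, gm. cbn [dpart]. fold a b. rewrite Hdt. rewrite Hdt in Hd.
    ipexp.
    ipnorm (cons a (cons b (cons P00 (cons P01 (cons P11 nil))))).
    rewrite Edt, Eg00, Eg01, Eg11. unfold p in *. field. auto. }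
  assert (ENN : ip Nv Nv = t0*t0*(t0*t0*ip P00 P00 + 2*t0*t1*ip P00 P01 + t1*t1*ip P00 P11)
        + 2*t0*t1*(t0*t0*ip P00 P01 + 2*t0*t1*ip P01 P01 + t1*t1*ip P01 P11)
        + t1*t1*(t0*t0*ip P00 P11 + 2*t0*t1*ip P01 P11 + t1*t1*ip P11 P11)).
  { unfold Nv. rewrite !II_eq, E10. cbn [fst snd]. fold P00 P01 P11. ipexp.
    ipnorm (cons P00 (cons P01 (cons P11 nil))). ring. }
  assert (EPN : forall P, ip P Nv = t0*t0*ip P P00 + 2*t0*t1*ip P P01 + t1*t1*ip P P11).
  { intro P. unfold Nv. rewrite !II_eq, E10. cbn [fst snd]. fold P00 P01 P11. ipexp. ring. }
  assert (Hnn : 0 < ip Nv Nv).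
  { apply (timelike_perp (vadd (vadd (vscal t0 a) (vscal t1 b)) (vadd (vscal w0 a) (vscal w1 b)))).
    - ipexp. rewrite ?(ip_sym b a). nra.
    - ipexp. unfold Nv. rewrite !II_eq. ipexp. rewrite !(ip_sym _ a), !(ip_sym _ b), !Pa, !Pb. ring.
    - exact HIIN. }
  set (n := vnorm Nv).
  assert (Hn2 : n * n = ip Nv Nv) by (unfold n, vnorm; apply sqrt_sqrt; lra).
  assert (Hn0 : n <> 0) by (intro e; rewrite e in Hn2; lra).
  assert (Hr2 : / sqrt 2 * / sqrt 2 = / 2).
  { rewrite <- Rinv_mult. rewrite sqrt_sqrt; lra. }
  assert (S3 : KN f Z (w0, w1) u v = n * ip W2 Zp).
  { unfold KN. cbv zeta. rewrite ip_tv. rewrite !(Ash_eq f _ _ u v E10).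
    unfold e1c, e2c, psub, ZT. rewrite ET. cbn [fst snd].
    rewrite EN. fold Nv. fold n. fold P00 P01 P11 Zp.
    rewrite !ip_scal_r, !EPN.
    fold a b. unfold ginv, gm. cbn [dpart]. fold a b. rewrite Hdt.
    unfold W2. rewrite II_eq, E10. cbn [fst snd]. fold P00 P01 P11. ipexp.
    rewrite Edt, Eg00, Eg01, Eg11.
    ipnorm (cons P00 (cons P01 (cons P11 nil))).
    assert (Hs2 : sqrt 2 <> 0) by (apply Rgt_not_eq, sqrt_lt_R0; lra).
    match goal with |- _ = n * ?c => transitivity (/ sqrt 2 * / sqrt 2 * 2 * (/ n * (ip Nv Nv * c))) end.
    2: { rewrite Hr2, <- Hn2. field. exact Hn0. }
    rewrite ENN.
    pose proof (HA 0%nat) as A0. pose proof (HA 1%nat) as A1. rewrite E10 in A0.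
    change (IIb f 0 0 u v) with P00 in A0. change (IIb f 0 1 u v) with P01 in A0, A1.
    change (IIb f 1 1 u v) with P11 in A1. change (nproj f Z u v) with Zp in A0, A1.
    unfold p in *.
    destruct (Req_dec t0 0) as [Et0|Et0].
    { rewrite Et0 in *. assert (Ht1 : t1 <> 0) by (destruct HT; [lra|auto]).
      assert (Ez01 : ip P01 Zp = 0) by (apply (Rmult_eq_reg_l t1); lra).
      assert (Ez11 : ip P11 Zp = 0) by (apply (Rmult_eq_reg_l t1); lra).
      rewrite Ez01, Ez11. field. repeat split; auto. intro e; apply Hp; rewrite e; ring. }
    { assert (Ez01 : ip P01 Zp = - t1 * ip P11 Zp / t0) by (field_simplify_eq; auto; lra).
      assert (Ez00 : ip P00 Zp = - t1 * ip P01 Zp / t0) by (field_simplify_eq; auto; lra).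
      rewrite Ez00, Ez01. field. repeat split; auto. } }
  rewrite S2, S3.
  pose proof (HA 0%nat) as A0. pose proof (HA 1%nat) as A1. rewrite E10 in A0.
  change (IIb f 0 0 u v) with P00 in A0. change (IIb f 0 1 u v) with P01 in A0, A1.
  change (IIb f 1 1 u v) with P11 in A1. change (nproj f Z u v) with Zp in A0, A1.
  set (X := vadd (vscal t0 a) (vscal t1 b)) in *.
  set (Y := vadd (vscal w0 a) (vscal w1 b)) in *.
  assert (EZp : Zp = vsub Z X) by (unfold Zp, nproj; rewrite EX, tv_eq; reflexivity).
  assert (EZ : Z = vadd X Zp).
  { rewrite EZp. destruct Z as [z0 z1 z2 z3]. unfold vadd, vsub, vscal; simpl; f_equal; ring. }
  assert (XZp : ip X Zp = 0) by (unfold X; ipexp; rewrite Za, Zb; ring).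
  assert (YZp : ip Y Zp = 0) by (unfold Y; ipexp; rewrite Za, Zb; ring).
  assert (XX : ip X X = 0) by (unfold X; ipexp; rewrite ?(ip_sym b a); rewrite <- HXX; ring).
  assert (YY : ip Y Y = 0) by (unfold Y; ipexp; rewrite ?(ip_sym b a); rewrite <- Hww; ring).
  assert (XY : ip X Y = -1) by (unfold X, Y; ipexp; rewrite ?(ip_sym b a); rewrite <- HXw; ring).
  assert (ZpZp : ip Zp Zp = 1).
  { rewrite <- hZ. rewrite EZ at 1 2. ipexp. rewrite XX, XZp, (ip_sym Zp X), XZp. ring. }
  assert (ZpN : ip Zp Nv = 0).
  { rewrite EPN, (ip_sym Zp P00), (ip_sym Zp P01), (ip_sym Zp P11).
    replace (t0 * t0 * ip P00 Zp + 2 * t0 * t1 * ip P01 Zp + t1 * t1 * ip P11 Zp)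
      with (t0 * (t0 * ip P00 Zp + t1 * ip P01 Zp) + t1 * (t0 * ip P01 Zp + t1 * ip P11 Zp)) by ring.
    rewrite A0, A1. ring. }
  assert (aN : ip a Nv = 0) by (unfold Nv; rewrite II_eq; ipexp; rewrite !Pa; ring).
  assert (bN : ip b Nv = 0) by (unfold Nv; rewrite II_eq; ipexp; rewrite !Pb; ring).
  assert (aW : ip a W2 = 0) by (unfold W2; rewrite II_eq; ipexp; rewrite !Pa; ring).
  assert (bW : ip b W2 = 0) by (unfold W2; rewrite II_eq; ipexp; rewrite !Pb; ring).
  assert (XN : ip X Nv = 0) by (unfold X; ipexp; rewrite aN, bN; ring).
  assert (YN : ip Y Nv = 0) by (unfold Y; ipexp; rewrite aN, bN; ring).
  assert (XW : ip X W2 = 0) by (unfold X; ipexp; rewrite aW, bW; ring).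
  assert (YW : ip Y W2 = 0) by (unfold Y; ipexp; rewrite aW, bW; ring).
  set (c := ip W2 Zp) in *. set (m := ip W2 Nv) in *. set (nn := ip Nv Nv) in *.
  assert (Hdet : det4 X Y Zp Nv <> 0).
  { intro e. pose proof (cauchy_binet X Y Zp Nv) as CB. rewrite e in CB.
    rewrite XX, XY, XZp, XN, YY, YZp, YN, ZpZp, ZpN in CB. fold nn in CB.
    unfold gdet in CB. lra. }
  assert (EW : W2 = vadd (vscal c Zp) (vscal (m / nn) Nv)).
  { apply vsub_zero. apply (complete4 X Y Zp Nv); auto; ipexp.
    - rewrite XW, XZp, XN. ring.
    - rewrite YW, YZp, YN. ring.
    - rewrite (ip_sym Zp W2). fold c. rewrite ZpZp, ZpN. ring.
    - rewrite (ip_sym Nv W2). fold m. rewrite (ip_sym Nv Zp), ZpN. fold nn. field. lra. }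
  split.
  { rewrite EW at 1. replace (n * c / n) with c by (field; exact Hn0).
    assert (VV : vscal (m / n) (vscal (/ n) Nv) = vscal (m / nn) Nv).
    { replace (m / nn) with (m / n * / n) by (rewrite <- Hn2; field; exact Hn0).
      destruct Nv; unfold vscal; simpl; f_equal; ring. }
    rewrite VV. reflexivity. }
  { rewrite EW at 1 2. ipexp. rewrite ZpZp, ZpN, (ip_sym Nv Zp), ZpN. fold nn.
    replace ((n * c)^2) with (n * n * c^2) by ring. rewrite Hn2. field. lra. }
Qed.
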